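(* Let $\mathcal{K}=\mathcal{C}_\circ\setminus \mathcal{C}_\circ\mathcal{A}^+$. Then $\mathcal{K}$ is a prefix code and $\mathcal{K}^*=\mathcal{C}^*$. Moreover, every word of $\mathcal{C}^*$ admits a unique factorization $\kappa_{1}\kappa_{2}\cdots\kappa_{j}$ with $j\ge 0$ and all $\kappa_i\in\mathcal{K}$; that is, $\mathcal{K}$ generates $\mathcal{C}^*$ unambiguously.
   Context: Let $\mathcal{A}$ be a finite alphabet and $w\in\mathcal{A}^*$ a fixed word of length $\ell=|w|\ge 2$. The autocorrelation set of $w$ is $\mathcal{C}=\{\epsilon\}\cup\{e\in\mathcal{A}^+ : |e|<\ell \text{ and there exists } e'\in\mathcal{A}^+ \text{ with } we=e'w\}$, and $\mathcal{C}_\circ=\mathcal{C}\setminus\{\epsilon\}$. For languages $L_1,L_2$, $L_1L_2$ denotes concatenation and $L^*$ the Kleene star. Thus $\mathcal{K}=\mathcal{C}_\circ\setminus \mathcal{C}_\circ\mathcal{A}^+$ is the set of words of $\mathcal{C}_\circ$ that have no proper prefix lying in $\mathcal{C}_\circ$. *)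

(* Defs.v *)
From mathcomp Require Import all_boot.
Set Implicit Arguments. Unset Strict Implicit. Unset Printing Implicit Defensive.

Definition lang (A : finType) := seq A -> Prop.

Definition autocorr (A : finType) (w : seq A) : lang A :=
  fun e => e = [::] \/
    (0 < size e /\ size e < size w /\
     exists e' : seq A, 0 < size e' /\ w ++ e = e' ++ w).

Definition autocorr0 (A : finType) (w : seq A) : lang A :=
  fun e => autocorr w e /\ e <> [::].

Definition concat_plus (A : finType) (L : lang A) : lang A :=
  fun x => exists u v : seq A, L u /\ 0 < size v /\ x = u ++ v.

Definition Kset (A : finType) (w : seq A) : lang A :=
  fun e => autocorr0 w e /\ ~ concat_plus (autocorr0 w) e.

Definition star (A : finType) (L : lang A) : lang A :=
  fun x => exists ls : seq (seq A), (forall u, u \in ls -> L u) /\ flatten ls = x.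

Definition prefix_code (A : finType) (L : lang A) : Prop :=
  forall u v s : seq A, L u -> L v -> u ++ s = v -> s = [::].

(* Main.v *)
Require Import Defs.
From mathcomp Require Import all_boot.
From Stdlib Require Import Classical.
Set Implicit Arguments. Unset Strict Implicit. Unset Printing Implicit Defensive.

Lemma ac0P (A : finType) (w e : seq A) :
  autocorr0 w e <-> (0 < size e /\ size e < size w /\ drop (size e) w ++ e = w).
Proof.
split.
- move=> [[->|[h1 [h2 [e' [h3 h4]]]]] hne]; first by [].
  split=>//; split=>//.
  have hs : size e' = size e.
    by have := congr1 size h4; rewrite !size_cat addnC => /eqP; rewrite eqn_add2r => /eqP ->.
  have := congr1 (drop (size e)) h4.
  by rewrite drop_cat h2 -{2}hs drop_size_cat.
- move=> [h1 [h2 h3]]; split; last by case: e h1 {h2 h3}.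
  right; split=>//; split=>//; exists (take (size e) w); split.
    by rewrite size_take h2.
  by rewrite -{3}h3 catA cat_take_drop.
Qed.

Lemma ac0_split (A : finType) (w u v : seq A) :
  autocorr0 w (u ++ v) -> autocorr0 w u -> 0 < size v -> autocorr0 w v.
Proof.
move=> /ac0P [c1 [c2 c3]] /ac0P [u1 [u2 u3]] hv; apply/ac0P.
have hsz : size (u ++ v) = size u + size v by rewrite size_cat.
split=>//; split; first by apply: leq_ltn_trans c2; rewrite hsz leq_addl.
have e1 : size v = size (u ++ v) - size u by rewrite hsz addKn.
rewrite e1.
have hle : size (u ++ v) - size u < size (drop (size u) w).
  by rewrite size_drop ltn_sub2r.
rewrite -{1}u3 drop_cat hle drop_drop subnK; last by rewrite hsz leq_addr.
by rewrite -catA.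
Qed.

Lemma star_cat (A : finType) (L : lang A) x y : star L x -> star L y -> star L (x ++ y).
Proof.
move=> [l1 [h1 <-]] [l2 [h2 <-]]; exists (l1 ++ l2); split; last by rewrite flatten_cat.
by move=> u; rewrite mem_cat => /orP [] ?; [apply: h1|apply: h2].
Qed.

Lemma star_one (A : finType) (L : lang A) x : L x -> star L x.
Proof. by move=> h; exists [:: x]; split; [move=> u; rewrite inE => /eqP ->|rewrite /= cats0]. Qed.

Lemma star_nil (A : finType) (L : lang A) : star L [::].
Proof. by exists [::]. Qed.

Lemma exmin (Q : nat -> Prop) : (exists m, Q m) -> exists m, Q m /\ forall k, Q k -> m <= k.
Proof.
move=> [m hm]; elim: m {-2}m (leqnn m) hm => [|n IH] m hmn hm.
  by exists m; split=>// k _; move: hmn; rewrite leqn0 => /eqP ->.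
have [h|h] := classic (exists k, k < m /\ Q k).
  by case: h => k [hk hQ]; apply: (IH k) => //; rewrite -ltnS; apply: leq_trans hk hmn.
exists m; split=>// k hk; rewrite leqNgt; apply/negP => hkm; apply: h; by exists k.
Qed.

Lemma ac0_starK (A : finType) (w : seq A) n c :
  size c < n -> autocorr0 w c -> star (Kset w) c.
Proof.
elim: n c => [|n IH] c //= hs hc.
have [hk|hnk] := classic (concat_plus (autocorr0 w) c); last first.
  by apply: star_one.
pose P := fun m => 0 < m /\ m < size c /\ autocorr0 w (take m c).
have exP : exists m, P m.
  case: hk => [u [v [hu [hv he]]]]; exists (size u); rewrite /P he take_size_cat //.
  split; first by have /ac0P [] := hu.
  by split=>//; rewrite size_cat -{1}(addn0 (size u)) ltn_add2l.
have [m [[m0 [mc hm]] hmin]] := exmin exP.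
rewrite -(cat_take_drop m c); apply: star_cat.
- apply: star_one; split=>// -[u [v [hu [hv he]]]].
  have hsu : size u < m.
    by have := congr1 size he; rewrite size_cat size_take mc => ->; rewrite -{1}(addn0 (size u)) ltn_add2l.
  have : P (size u).
    split; first by have /ac0P [] := hu.
    split; first exact: ltn_trans hsu mc.
    suff -> : take (size u) c = u by [].
      by rewrite -(take_takel _ (ltnW hsu)) he take_size_cat.
  by move=> /hmin; rewrite leqNgt hsu.
- apply: IH.
    have hs' : size c <= n by rewrite -ltnS.
    rewrite size_drop; apply: leq_trans hs'; rewrite ltn_subrL m0 /=; exact: leq_ltn_trans mc.
  apply: (@ac0_split _ w (take m c)) => //; first by rewrite cat_take_drop.
  by rewrite size_drop subn_gt0.
Qed.

Lemma starC_K (A : finType) (w x : seq A) : star (autocorr w) x -> star (Kset w) x.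
Proof.
move=> [ls [hls <-]]; elim: ls hls => [|l ls IH] hls /=; first exact: star_nil.
apply: star_cat; last by apply: IH => u hu; apply: hls; rewrite inE hu orbT.
have [->|hne] := eqVneq l [::]; first exact: star_nil.
apply: (@ac0_starK _ _ (size l).+1) => //; split; last by apply/eqP.
by apply: hls; rewrite inE eqxx.
Qed.

Lemma prefix_code_K (A : finType) (w : seq A) : prefix_code (Kset w).
Proof.
move=> u v s [hu _] [_ hnv] he; case: s he => [//|a s] he; exfalso.
by apply: hnv; exists u, (a :: s).
Qed.

Lemma pc_split (A : finType) (L : lang A) (hL : prefix_code L) k k' r r' :
  L k -> L k' -> k ++ r = k' ++ r' -> k = k' /\ r = r'.
Proof.
move=> hk hk' he.
suff hkk : k = k' by split=>//; have := congr1 (drop (size k)) he; rewrite drop_size_cat // hkk drop_size_cat.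
have [le|le] := leqP (size k) (size k').
- have h1 : take (size k) k' = k.
    by rewrite -(takel_cat r' le) -he take_size_cat.
  have := hL k k' (drop (size k) k') hk hk'; rewrite -{1}h1 cat_take_drop => /(_ erefl).
  by move=> hd; rewrite -h1 -{2}(cat_take_drop (size k) k') hd cats0.
- have le' : size k' <= size k by apply: ltnW.
  have h1 : take (size k') k = k'.
    by rewrite -(takel_cat r le') he take_size_cat.
  have := hL k' k (drop (size k') k) hk' hk; rewrite -{1}h1 cat_take_drop => /(_ erefl).
  by move=> hd; rewrite -h1 -{1}(cat_take_drop (size k') k) hd cats0.
Qed.

Lemma uniq_fact (A : finType) (w : seq A) (ks ks' : seq (seq A)) :
  (forall k, k \in ks -> Kset w k) -> (forall k, k \in ks' -> Kset w k) ->
  flatten ks = flatten ks' -> ks' = ks.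
Proof.
elim: ks ks' => [|k ks IH] [|k' ks'] //= h1 h2 he.
- have [[_ hne] _] := h2 k' (mem_head _ _).
  by case: k' he hne {h2}.
- have [[_ hne] _] := h1 k (mem_head _ _).
  by case: k he hne {h1}.
- have hk := h1 k (mem_head _ _); have hk' := h2 k' (mem_head _ _).
  have [e1 e2] := pc_split (@prefix_code_K _ w) hk hk' he.
  rewrite e1 (IH ks') //.
  + by move=> u hu; apply: h1; rewrite inE hu orbT.
  + by move=> u hu; apply: h2; rewrite inE hu orbT.
Qed.

Lemma starK_C (A : finType) (w x : seq A) : star (Kset w) x -> star (autocorr w) x.
Proof.
move=> [ls [hls <-]]; exists ls; split=>// u /hls [[h _] _]; exact: h.
Qed.

Theorem mainTheorem1 (A : finType) (w : seq A) (hw : 2 <= size w) :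
  prefix_code (Kset w) /\
  (forall x : seq A, star (Kset w) x <-> star (autocorr w) x) /\
  (forall x : seq A, star (autocorr w) x ->
     exists ks : seq (seq A),
       (forall k, k \in ks -> Kset w k) /\ flatten ks = x /\
       (forall ks' : seq (seq A),
          (forall k, k \in ks' -> Kset w k) -> flatten ks' = x -> ks' = ks)).
Proof.
split; first exact: prefix_code_K.
split; first by move=> x; split; [apply: starK_C|apply: starC_K].
move=> x /starC_K [ks [hks hf]]; exists ks; split=>//; split=>// ks' hks' hf'.
by apply: (uniq_fact hks hks'); rewrite hf hf'.
Qed.
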